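(* Let $n\geq2$ be an integer, $\beta\in\mathbb{Z}_p$, and let $A\in\mathbb{L}_p$ be any element with \[A=(-1)^n\zeta_{2(p-1)}p^{\frac{1}{p^{n-1}(p-1)}}\sigma_n\left(1+(-1)^n\beta\zeta_{2(p-1)}p^{\frac{1}{p^{n-1}(p-1)}}\right)+O\!\left(p^{\frac{2}{p^{n-1}(p-1)}}\right).\] Then, writing $\zeta=\zeta_{2(p-1)}$, \begin{align*} \zeta_{p^{n+1}}-\sum_{k=0}^{p-1}\frac{(-1)^k}{k!}A^k={}&(-1)^{n+1}\zeta p^{\frac{2p-1}{p^n(p-1)}}\sigma_{n+1}+\sum_{k=1}^{p-1}\frac{(-1)^k(k\beta-H_k)}{k!}(-1)^{nk+n+1}\zeta^{k+1}p^{\frac{k+p}{p^n(p-1)}}\\ &+\beta\zeta^2p^{\frac{2}{p^{n-1}(p-1)}}\sigma_{n+1}-\mathds{1}_3(p)\cdot\frac{(-1)^n}{2}\zeta^3p^{\frac{2p^2-p+2}{p^{n+1}(p-1)}}+O\!\left(p^{\frac{2}{p^{n-1}(p-1)}}\right), \end{align*} where $\mathds{1}_3(p)=1$ if $p=3$ and $0$ otherwise.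
   Context: $p\geq 3$ is a prime. $\mathbb{L}_p=W(\bar{\mathbb{F}}_p)((p^{\mathbb{Q}}))$ is the $p$-adic Mal'cev–Neumann field: each element is uniquely $\sum_{x\in\mathbb{Q}}[\alpha_x]p^x$ with $\alpha_x\in\bar{\mathbb{F}}_p$, $[\cdot]$ the Teichmüller lift, and well-ordered support; it is an algebraically closed complete field with valuation $v_p(\alpha)=\min$ of the support ($v_p(p)=1$), containing $\bar{\mathbb{Q}}_p$ via a fixed continuous embedding. For $x\in\mathbb{Q}$, $p^x$ denotes $[1]p^x$. For $r\in\mathbb{Q}$, ''$\alpha=\beta+O(p^r)$'' means $v_p(\alpha-\beta)\geq r$. $H_k=\sum_{i=1}^k1/i$. For $n\geq1$, $\sigma_n=\sum_{k=n}^{\infty}p^{-1/p^k}\in\mathbb{L}_p$. Fix a primitive $2(p-1)$-th root of unity $\zeta_{2(p-1)}\in W(\bar{\mathbb{F}}_p)$ and a system $(\zeta_{p^n})_{n\geq1}$ of primitive $p^n$-th roots of unity in $\mathbb{L}_p$ with $\zeta_{p^{n+1}}^p=\zeta_{p^n}$, normalized (as established in earlier work of the authors) so that for every $n\geq2$, writing $\zeta=\zeta_{2(p-1)}$, \[\zeta_{p^n}=\sum_{k=0}^{p-1}\frac{(-1)^{nk}}{k!}\zeta^k p^{\frac{k}{p^{n-1}(p-1)}}+\sum_{k=0}^{p-1}\frac{(-1)^{n(k+1)}}{k!}\zeta^{k+1}p^{\frac{k+p}{p^{n-1}(p-1)}}\sigma_n-\sum_{k=1}^{p-1}\frac{H_k}{k!}(-1)^{n(k+1)}\zeta^{k+1}p^{\frac{k+p}{p^{n-1}(p-1)}}+\frac12\zeta^2p^{\frac{2}{p^{n-2}(p-1)}}\sigma_n^2+\frac{(-1)^n}{2}\zeta^3p^{\frac{2}{p^{n-2}(p-1)}-\frac{p-2}{p^n(p-1)}}+O\!\left(p^{\frac{2}{p^{n-2}(p-1)}}\right).\]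 *)

(* Defs.v *)
From HB Require Import structures.
From mathcomp Require Import all_boot all_order all_algebra.
Set Implicit Arguments. Unset Strict Implicit. Unset Printing Implicit Defensive.
Import Order.TTheory GRing.Theory Num.Theory.
Local Open Scope ring_scope.

(* "v(x) >= r", with v(0) = +oo encoded by None *)
Definition vge (L : Type) (v : L -> option rat) (x : L) (r : rat) : bool :=
  if v x is Some q then r <= q else true.

Definition dd (p m : nat) : rat := (p%:R ^+ m) * (p%:R - 1).

Definition harm (F : fieldType) (k : nat) : F := \sum_(1 <= i < k.+1) (i%:R)^-1.

Definition invfact (F : fieldType) (k : nat) : F := ((k`!)%:R)^-1.

(* The right-hand side of the normalization formula for zeta_{p^n}
   (without its error term O(p^{2/(p^{n-2}(p-1))})). *)
Definition zeta_expansion (F : fieldType) (p : nat) (ppow : rat -> F)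
    (zeta : F) (sigma : nat -> F) (n : nat) : F :=
  \sum_(k < p) (-1) ^+ (n * k) * invfact F k * zeta ^+ k
                * ppow (k%:R / dd p n.-1)
  + \sum_(k < p) (-1) ^+ (n * k.+1) * invfact F k * zeta ^+ k.+1
                * ppow ((k + p)%:R / dd p n.-1) * sigma n
  - \sum_(1 <= k < p) harm F k * invfact F k * (-1) ^+ (n * k.+1)
                * zeta ^+ k.+1 * ppow ((k + p)%:R / dd p n.-1)
  + 2^-1 * zeta ^+ 2 * ppow (2 / dd p (n - 2)) * sigma n ^+ 2
  + (-1) ^+ n * 2^-1 * zeta ^+ 3
      * ppow (2 / dd p (n - 2) - (p%:R - 2) / dd p n).

(* The data (L_p, v_p, x |-> p^x, zeta_{2(p-1)}, sigma_n, zeta_{p^n})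
   together with the properties of them that hold in L_p. *)
Record MNField (p : nat) := {
  MNcar :> fieldType;
  vp : MNcar -> option rat;
  vp_eq0 : forall x, (vp x == None) = (x == 0);
  vpM : forall x y a b, vp x = Some a -> vp y = Some b ->
                         vp (x * y) = Some (a + b);
  vpD : forall x y r, vge vp x r -> vge vp y r -> vge vp (x + y) r;
  vp_nat : forall m, (0 < m)%N -> vp (m%:R) = Some ((logn p m)%:R);
  char0 : [pchar MNcar] =i pred0;
  ppow : rat -> MNcar;
  ppowD : forall x y, ppow (x + y) = ppow x * ppow y;
  ppow1 : ppow 1 = p%:R;
  vp_ppow : forall x, vp (ppow x) = Some x;
  zeta : MNcar;
  zeta_prim : (2 * (p - 1)).-primitive_root zeta;
  sigma : nat -> MNcar;                         (* sigma_n = sum_{k>=n} p^{-1/p^k} *)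
  sigmaS : forall n, (1 <= n)%N ->
     sigma n = ppow (- (p%:R ^+ n)^-1) + sigma n.+1;
  vp_sigma : forall n, (1 <= n)%N -> vp (sigma n) = Some (- (p%:R ^+ n)^-1);
  zp : nat -> MNcar;
  zp_prim : forall n, (1 <= n)%N -> (p ^ n).-primitive_root (zp n);
  zp_compat : forall n, (1 <= n)%N -> zp n.+1 ^+ p = zp n;
  zp_norm : forall n, (2 <= n)%N ->
     vge vp (zp n - @zeta_expansion MNcar p ppow zeta sigma n) (2 / dd p (n - 2))
}.

(* Main.v *)
Require Import Defs.
From HB Require Import structures.
From mathcomp Require Import all_boot all_order all_algebra.
From mathcomp Require Import ring lra zify.
Import Order.TTheory GRing.Theory Num.Theory.
Local Open Scope ring_scope.
Set Implicit Arguments. Unset Strict Implicit. Unset Printing Implicit Defensive.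

Lemma vp0 p (M : MNField p) : @vp _ M 0 = None.
Proof. by apply/eqP; rewrite vp_eq0. Qed.

Lemma vge0 p (M : MNField p) r : vge (@vp p M) 0 r.
Proof. by rewrite /vge vp0. Qed.

Lemma vpSome p (M : MNField p) (x : MNcar M) : x != 0 -> exists a, @vp _ M x = Some a.
Proof.
move=> nz; case E: (@vp _ M x) => [a|]; first by exists a.
by move/eqP: E; rewrite vp_eq0 (negbTE nz).
Qed.

Lemma vge_le p (M : MNField p) (x : MNcar M) a b : vge (@vp p M) x a -> b <= a -> vge (@vp p M) x b.
Proof. rewrite /vge; case: (@vp _ M x) => // q h1 h2; exact: le_trans h2 h1. Qed.

Lemma vgeM p (M : MNField p) (x y : MNcar M) a b :
  vge (@vp p M) x a -> vge (@vp p M) y b -> vge (@vp p M) (x * y) (a + b).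
Proof.
have [->|nx] := eqVneq x 0; first by rewrite mul0r => _ _; apply: vge0.
have [->|ny] := eqVneq y 0; first by rewrite mulr0 => _ _; apply: vge0.
have [qx Ex] := vpSome nx; have [qy Ey] := vpSome ny.
by rewrite /vge (vpM Ex Ey) Ex Ey => h1 h2; apply: lerD.
Qed.

Lemma vp1 p (M : MNField p) : @vp _ M 1 = Some 0.
Proof. have := @vp_nat p M 1%N isT. by rewrite logn1. Qed.

Lemma vpV p (M : MNField p) (x : MNcar M) a : @vp _ M x = Some a -> @vp _ M x^-1 = Some (- a).
Proof.
move=> E; have nx : x != 0 by rewrite -vp_eq0 E.
have nix : x^-1 != 0 by rewrite invr_eq0.
have [b Eb] := vpSome nix.
have := vpM E Eb; rewrite mulfV // vp1 => -[h].
rewrite Eb; congr Some.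
have -> : b = (a + b) - a by rewrite addrC addKr.
by rewrite -h sub0r.
Qed.

Lemma vpN1 p (M : MNField p) : @vp _ M (-1) = Some 0.
Proof.
have nz : (-1 : MNcar M) != 0 by rewrite oppr_eq0 oner_eq0.
have [a Ea] := vpSome nz.
have := vpM Ea Ea; rewrite mulrNN mulr1 vp1 => -[h].
rewrite Ea; congr Some.
have : 2 * a = 0 by rewrite mulr2n mulrDl mul1r h.
by move/eqP; rewrite mulf_eq0 pnatr_eq0 /= => /eqP.
Qed.

Lemma vgeN p (M : MNField p) (x : MNcar M) r : vge (@vp p M) x r -> vge (@vp p M) (- x) r.
Proof.
move=> h; rewrite -mulN1r -[r]add0r; apply: vgeM => //.
by rewrite /vge vpN1.
Qed.

Lemma vgeB p (M : MNField p) (x y : MNcar M) r :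
  vge (@vp p M) x r -> vge (@vp p M) y r -> vge (@vp p M) (x - y) r.
Proof. by move=> hx hy; apply: vpD => //; apply: vgeN. Qed.

Lemma vge_sum p (M : MNField p) (a b : nat) (f : nat -> MNcar M) r :
  (forall i, (a <= i < b)%N -> vge (@vp p M) (f i) r) ->
  vge (@vp p M) (\sum_(a <= i < b) f i) r.
Proof.
move=> h; rewrite big_nat_cond; apply: (big_ind (fun x => vge (@vp p M) x r)).
- exact: vge0.
- by move=> x y; apply: vpD.
- by move=> i /andP[Hi _]; apply: h.
Qed.

Lemma vgeX p (M : MNField p) (x : MNcar M) a k :
  vge (@vp p M) x a -> vge (@vp p M) (x ^+ k) (k%:R * a).
Proof.
move=> h; elim: k => [|k IH]; first by rewrite expr0 mul0r /vge vp1.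
by rewrite exprS -addn1 natrD mulrDl mul1r addrC; apply: vgeM.
Qed.

Lemma vge_ppow p (M : MNField p) r : vge (@vp p M) (ppow M r) r.
Proof. by rewrite /vge vp_ppow. Qed.

Lemma vge_nat p (M : MNField p) m : vge (@vp p M) (m%:R) 0.
Proof.
case: m => [|m]; first exact: vge0.
by rewrite /vge vp_nat.
Qed.

Lemma vge1 p (M : MNField p) : vge (@vp p M) 1 0.
Proof. by rewrite /vge vp1. Qed.

Lemma vge_sign p (M : MNField p) k : vge (@vp p M) ((-1) ^+ k) 0.
Proof.
have := @vgeX p M (-1) 0 k; rewrite mulr0; apply; by rewrite /vge vpN1.
Qed.

Lemma ppow0 p (M : MNField p) : ppow M 0 = 1.
Proof.
have nz : ppow M 0 != 0 by rewrite -vp_eq0 vp_ppow.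
have := ppowD M 0 0; rewrite addr0 => h.
by apply: (mulfI nz); rewrite -h mulr1.
Qed.

Lemma ppowMn p (M : MNField p) k r : ppow M (k%:R * r) = ppow M r ^+ k.
Proof.
elim: k => [|k IH]; first by rewrite mul0r ppow0 expr0.
by rewrite -addn1 natrD mulrDl mul1r ppowD IH exprD expr1.
Qed.

Lemma natF_neq0 p (M : MNField p) m : (0 < m)%N -> (m%:R : MNcar M) != 0.
Proof.
move=> hm; have /pcharf0P h := char0 M.
by rewrite h -lt0n.
Qed.

Lemma vge_invnat p (M : MNField p) m : prime p -> ~~ (p %| m)%N -> (0 < m)%N ->
  vge (@vp p M) (m%:R)^-1 0.
Proof.
move=> pp nd hm; rewrite /vge (vpV (vp_nat M hm)).
by rewrite lognE pp hm (negbTE nd) /= oppr0.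
Qed.

Lemma vge_invfact p (M : MNField p) k : prime p -> (k < p)%N -> vge (@vp p M) (invfact _ k) 0.
Proof.
move=> pp hk; apply: vge_invnat => //; last exact: fact_gt0.
rewrite -prime_coprime // coprime_sym.
elim: k hk => [|k IH] hk; first by rewrite coprime1n.
rewrite factS coprimeMl IH ?andbT; last exact: ltnW.
rewrite coprime_sym prime_coprime //; apply/negP => /dvdn_leq hle.
by move: hk; rewrite ltnNge hle.
Qed.


Lemma vpX p (M : MNField p) (x : MNcar M) a k :
  @vp _ M x = Some a -> @vp _ M (x ^+ k) = Some (k%:R * a).
Proof.
move=> E; elim: k => [|k IH]; first by rewrite expr0 vp1 mul0r.
by rewrite exprS (vpM E IH) -addn1 natrD mulrDl mul1r addrC.
Qed.

Lemma vge_zeta p (M : MNField p) : (2 <= p)%N -> vge (@vp _ M) (zeta M) 0.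
Proof.
move=> hp; have pr := zeta_prim M.
have e1 := prim_expr_order pr.
have hk : (0 < 2 * (p - 1))%N by rewrite muln_gt0 /= subn_gt0.
have nz : zeta M != 0.
  apply/negP => /eqP z0; move: e1; rewrite z0 expr0n.
  by rewrite eqn0Ngt hk /= => /eqP; rewrite eq_sym oner_eq0.
have [a Ea] := vpSome nz.
have := vpX (2 * (p - 1)) Ea; rewrite e1 vp1 => -[h].
rewrite /vge Ea.
have : (2 * (p - 1))%:R * a = 0 by rewrite -h.
move/eqP; rewrite mulf_eq0 pnatr_eq0 eqn0Ngt hk /= => /eqP ->; by [].
Qed.

Lemma zeta_pm1 p (M : MNField p) : (2 <= p)%N -> zeta M ^+ (p.-1) = -1.
Proof.
move=> hp; have pr := zeta_prim M.
have e1 := prim_expr_order pr.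
have hsq : (zeta M ^+ p.-1) ^+ 2 = 1 by rewrite -exprM mulnC -subn1.
have hn1 : zeta M ^+ p.-1 != 1.
  rewrite -(prim_order_dvd pr); apply/negP => /dvdn_leq.
  have h0 : (0 < p.-1)%N by rewrite -subn1 subn_gt0.
  move/(_ h0); rewrite -!subn1; move: hp; clear; lia.
move/eqP: hsq; rewrite expr2 -subr_eq0.
have -> : zeta M ^+ p.-1 * zeta M ^+ p.-1 - 1 = (zeta M ^+ p.-1 - 1) * (zeta M ^+ p.-1 + 1) by ring.
rewrite mulf_eq0 subr_eq0 (negbTE hn1) /= addr_eq0 => /eqP //.
Qed.

Lemma vge_half p (M : MNField p) : prime p -> (3 <= p)%N -> vge (@vp _ M) (2%:R^-1) 0.
Proof.
move=> pp hp; apply: vge_invnat => //.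
apply/negP => /dvdn_leq h; by move: (leq_trans hp (h isT)).
Qed.

Lemma vge_wilson p (M : MNField p) : prime p ->
  vge (@vp _ M) (invfact _ p.-1 + 1) 1.
Proof.
move=> pp; have p1 := prime_gt1 pp.
have := Wilson p1; rewrite pp => /esym hd.
set f := (p.-1)`!.
have fnz : (f%:R : MNcar M) != 0 := natF_neq0 M (fact_gt0 _).
have -> : invfact (MNcar M) p.-1 + 1 = (p%:R * (f.+1 %/ p)%:R) * (f%:R)^-1.
  rewrite -natrM mulnC divnK // /invfact -/f.
  by rewrite -addn1 natrD mulrDl mulfV // mul1r addrC.
rewrite -[X in vge _ _ X]addr0; apply: vgeM; last first.
  by apply: vge_invfact => //; rewrite prednK ?prime_gt0.
rewrite -[X in vge _ _ X]addr0; apply: vgeM; last exact: vge_nat.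
by rewrite /vge (vp_nat M (prime_gt0 pp)) logn_prime // eqxx.
Qed.


Lemma double_sum (R : zmodType) (g : nat -> nat -> R) m :
  \sum_(0 <= k < m) \sum_(0 <= i < k.+1) g i (k - i)%N =
  \sum_(0 <= i < m) \sum_(0 <= j < m - i) g i j.
Proof.
elim: m => [|m IH]; first by rewrite !big_geq.
rewrite big_nat_recr //= IH.
have -> : \sum_(0 <= i < m.+1) \sum_(0 <= j < m.+1 - i) g i j =
   \sum_(0 <= i < m.+1) (\sum_(0 <= j < m - i) g i j + g i (m - i)%N).
  apply: eq_big_nat => i /andP[_ Hi]; rewrite subSn // big_nat_recr //.
rewrite big_split /=; congr (_ + _).
by rewrite [in RHS]big_nat_recr //= subnn (big_geq (leqnn 0)) addr0.
Qed.

Lemma expsum (F : fieldType) (hc : [pchar F] =i pred0) (X Y : F) m :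
  \sum_(k < m) invfact F k * (X + Y) ^+ k =
  \sum_(0 <= i < m) Y ^+ i * invfact F i * \sum_(0 <= j < m - i) X ^+ j * invfact F j.
Proof.
have nz : forall k, (k`!%:R : F) != 0.
  move=> k; have /pcharf0P h := hc; by rewrite h -lt0n fact_gt0.
rewrite -(big_mkord xpredT (fun k => invfact F k * (X + Y) ^+ k)).
transitivity (\sum_(0 <= k < m) \sum_(0 <= i < k.+1) Y ^+ i * invfact F i * (X ^+ (k - i) * invfact F (k - i))); last first.
  transitivity (\sum_(0 <= i < m) \sum_(0 <= j < m - i) Y ^+ i * invfact F i * (X ^+ j * invfact F j)).
    exact: (double_sum (fun i j => Y ^+ i * invfact F i * (X ^+ j * invfact F j)) m).
  by apply: eq_bigr => i _; rewrite mulr_sumr.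
apply: eq_bigr => k _.
rewrite exprDn mulr_sumr -(big_mkord xpredT (fun i => invfact F k * (X ^+ (k - i) * Y ^+ i *+ 'C(k, i)))).
apply: eq_big_nat => i /andP[_ Hi].
have hb := @bin_fact k i Hi.
rewrite /invfact -[_ *+ 'C(k, i)]mulr_natr.
have : ('C(k, i)%:R * (i`!%:R * (k - i)`!%:R) : F) = k`!%:R by rewrite -!natrM hb.
move=> h.
have hC : ('C(k, i)%:R : F) = k`!%:R / (i`!%:R * (k - i)`!%:R) by rewrite -h mulfK // mulf_neq0.
rewrite hC; field.
by rewrite !nz.
Qed.

Lemma invfactS (F : fieldType) (hc : [pchar F] =i pred0) k :
  (k.+1)%:R * invfact F k.+1 = invfact F k.
Proof.
have nz : forall k, (k`!%:R : F) != 0.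
  move=> m; have /pcharf0P h := hc; by rewrite h -lt0n fact_gt0.
have nz1 : (k.+1%:R : F) != 0 by have /pcharf0P h := hc; rewrite h.
by rewrite /invfact factS natrM invfM mulrA mulfV // mul1r.
Qed.


Lemma combine (R : comRingType) (zp Z FA S1 S2 S3 S4 S5 Gp Gp1 Gp2 Tail R1 R2 Bs R3 R4 Y Y1 Y2 Y3 E0 Xp c h : R) :
 Z = S1 + S2 - S3 + S4 + S5 -> S1 = Gp -> S2 = Y1 * Gp -> S4 = h * Y1 ^+ 2 ->
 FA = Gp + Y * Gp1 + h * Y ^+ 2 * Gp2 + Tail -> R2 = Bs - S3 -> Bs = - (Y2 * Gp1) -> R3 = - Y3 ->
 Gp = Gp1 + Xp * c -> Y = Y1 + Y2 + Y3 - E0 -> Y1 * Xp = - R1 ->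
 zp - FA - (R1 + R2 + R3 - R4) =
   (zp - Z) + (- (R1 * (c + 1)) - Y3 * (Gp1 - 1) + E0 * Gp1 - h * (Y ^+ 2 - Y1 ^+ 2) * Gp2 - Tail
   + (h * Y1 ^+ 2 * (1 - Gp2) + S5 + R4)).
Proof.
move=> -> -> -> -> -> -> -> -> -> hy h1.
have -> : R1 = - (Y1 * Xp) by rewrite h1 opprK.
rewrite hy; ring.
Qed.


Lemma wle (w a b g : rat) : 0 <= w -> 0 <= g -> b - a = w * g -> a <= b.
Proof. by move=> w0 g0 e; rewrite -subr_ge0 e mulr_ge0. Qed.

Lemma test (P : rat) : 3 <= P -> 0 <= P^+3 - 3 * P^+2 + 3 * P.
Proof. move=> h. nra. Qed.

Lemma test2 (n : nat) : (2 <= n)%N -> (n.+1 - 2 = n.-1)%N.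
Proof. lia. Qed.

Lemma vge_Gpart p (M : MNField p) (X : MNcar M) u a b : prime p -> (b <= p)%N -> 0 <= u ->
  vge (@vp _ M) X u -> vge (@vp _ M) (\sum_(a <= j < b) X ^+ j * invfact _ j) (a%:R * u).
Proof.
move=> pp hb u0 hX; apply: vge_sum => j /andP[h1 h2].
apply: vge_le (vgeM (vgeX j hX) (vge_invfact M pp (leq_trans h2 hb))) _.
by rewrite addr0 ler_wpM2r // ler_nat.
Qed.

Ltac wle_tac w g := apply: (@wle w _ _ g); [ by [] | nra | ring ].


Theorem corollary2p5 (p : nat) (M : MNField p) (n : nat) (beta A : MNcar M) :
  prime p -> (3 <= p)%N -> (2 <= n)%N ->
  vge (@vp p M) beta 0 ->                              (* beta integral *)
  vge (@vp p M)
    (A - (-1) ^+ n * zeta M * ppow M (1 / dd p n.-1) * sigma M n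
          * (1 + (-1) ^+ n * beta * zeta M * ppow M (1 / dd p n.-1)))
    (2 / dd p n.-1) ->
  vge (@vp p M)
    (zp M n.+1 - \sum_(k < p) (-1) ^+ k * @invfact (MNcar M) k * A ^+ k
      - ( (-1) ^+ n.+1 * zeta M * ppow M ((2 * p - 1)%:R / dd p n) * sigma M n.+1
        + \sum_(1 <= k < p) (-1) ^+ k * (k%:R * beta - @harm (MNcar M) k) * @invfact (MNcar M) k
             * (-1) ^+ (n * k + n + 1) * zeta M ^+ k.+1
             * ppow M ((k + p)%:R / dd p n)
        + beta * zeta M ^+ 2 * ppow M (2 / dd p n.-1) * sigma M n.+1
        - (if p == 3%N then 1 else 0)
             * ((-1) ^+ n * 2^-1 * zeta M ^+ 3
                * ppow M ((2 * p ^ 2 - p + 2)%:R / dd p n.+1))))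
    (2 / dd p n.-1).
Proof.
move=> pp p3 n2 hb hA.
have p2 : (2 <= p)%N by apply: ltnW.
have p0 : (0 < p)%N by apply: ltnW.
pose P : rat := p%:R.
have P3 : 3 <= P by rewrite /P (ler_nat _ 3 p).
have P0 : 0 < P by apply: lt_le_trans P3.
have hn : n = n.-1.+1 by rewrite prednK // ltnW.
have hn2 : (n.+1 - 2 = n.-1)%N by lia.
set D := dd p n.
have hD : D = P ^+ n * (P - 1) by [].
have hD1 : dd p n.-1 = D / P.
  rewrite hD /dd -/P {2}hn exprS; field; lra.
have hDS : dd p n.+1 = P * D by rewrite /dd exprS -/P mulrA.
have Dpos : 0 < D by rewrite hD mulr_gt0 ?exprn_gt0 //; lra.
have [w [w0 [Eu [En [En1 En2]]]]] : exists w : rat, 0 < w /\ D^-1 = P ^+ 2 * w /\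
    (P ^+ n)^-1 = (P - 1) * P ^+ 2 * w /\ (P ^+ n.+1)^-1 = (P - 1) * P * w /\
    (P ^+ n.+2)^-1 = (P - 1) * w.
  exists (P ^+ 2 * D)^-1; split; first by rewrite invr_gt0 mulr_gt0 // exprn_gt0.
  have Pn0 : P ^+ n != 0 by rewrite expf_neq0 // gt_eqF.
  rewrite hD !exprS; split; first by field; rewrite Pn0 /=; lra.
  split; first by field; rewrite Pn0 /=; lra.
  split; first by field; rewrite Pn0 /=; lra.
  by field; rewrite Pn0 /=; lra.
pose e := ppow M D^-1.
have ek : forall k, e ^+ k = ppow M (k%:R / D) by move=> k; rewrite ppowMn.
pose s : MNcar M := (-1) ^+ n.
set z := zeta M.
pose sg := sigma M n.+1.
pose q0 := ppow M (- (P ^+ n)^-1).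
pose X := (-1) ^+ n.+1 * z * e.
pose Y1 := - (s * z * e ^+ p * sg).
pose Y2 := - (beta * z ^+ 2 * e ^+ p.+1).
pose Y3 := - (beta * z ^+ 2 * e ^+ (2 * p) * sg).
pose G m := \sum_(0 <= j < m) X ^+ j * invfact (MNcar M) j.
have Xk : forall k, X ^+ k = (-1) ^+ (n.+1 * k) * z ^+ k * e ^+ k.
  by move=> k; rewrite /X !exprMn exprM.
have f2 : ppow M (1 / dd p n.-1) = e ^+ p.
  rewrite ek hD1; congr ppow; rewrite /P; field.
  by rewrite gt_eqF //= pnatr_eq0 -lt0n p0.
have f1 : e ^+ p * q0 = e.
  rewrite ek /q0 -ppowD; congr ppow.
  by rewrite En Eu /P; ring.
have f3 : sigma M n = q0 + sg by rewrite (sigmaS M (ltnW n2)).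
set E0 := (A - _) in hA.
pose Y := - A - X.
have hY : Y = Y1 + Y2 + Y3 - E0.
  rewrite /Y /E0 f2 f3 /Y1 /Y2 /Y3 /X /s [(-1) ^+ n.+1]exprS [e ^+ p.+1]exprSr mul2n -addnn exprD.
  move: f1; move: (e ^+ p) => ep f1; rewrite -f1.
  by rewrite -signr_odd /z; case: (odd n); rewrite /= ?expr0 ?expr1; ring.
pose Tail := \sum_(3 <= i < p) Y ^+ i * invfact (MNcar M) i * G (p - i)%N.
have hF : \sum_(k < p) (-1) ^+ k * invfact (MNcar M) k * A ^+ k =
    G p + Y * G p.-1 + 2^-1 * Y ^+ 2 * G (p - 2)%N + Tail.
  transitivity (\sum_(k < p) invfact (MNcar M) k * (X + Y) ^+ k).
    by apply: eq_bigr => k _; rewrite /Y addrC subrK [(- A) ^+ k]exprNn; ring.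
  rewrite (expsum (char0 M)) big_ltn // big_ltn // big_ltn //.
  have i0 : invfact (MNcar M) 0 = 1 by rewrite /invfact fact0 invr1.
  have i1 : invfact (MNcar M) 1 = 1 by rewrite /invfact (_ : (1`! = 1)%N) // invr1.
  have i2 : invfact (MNcar M) 2 = 2^-1 by rewrite /invfact (_ : (2`! = 2)%N).
  by rewrite /G /Tail subn0 subn1 i0 i1 i2 expr0 expr1; ring.
have f4 : ppow M (2 / dd p n.-1) = e ^+ (2 * p).
  rewrite ek hD1; congr ppow; rewrite natrM /P; field.
  by rewrite gt_eqF //= pnatr_eq0 -lt0n p0.
have hS1 : \sum_(k < p) (-1) ^+ (n.+1 * k) * invfact (MNcar M) k * z ^+ k * ppow M (k%:R / D) = G p.
  by rewrite /G big_mkord; apply: eq_bigr => k _; rewrite Xk ek; ring.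
have hS2 : \sum_(k < p) (-1) ^+ (n.+1 * k.+1) * invfact (MNcar M) k * z ^+ k.+1
     * ppow M ((k + p)%:R / D) * sigma M n.+1 = Y1 * G p.
  rewrite /G big_mkord mulr_sumr; apply: eq_bigr => k _.
  rewrite Xk /Y1 /s /sg -ek exprD mulnS exprD [(-1) ^+ n.+1]exprS [z ^+ k.+1]exprS; ring.
have hS4 : 2^-1 * z ^+ 2 * ppow M (2 / dd p (n.+1 - 2)) * sigma M n.+1 ^+ 2 = 2^-1 * Y1 ^+ 2.
  rewrite hn2 f4 /Y1 /s /sg mul2n -addnn exprD.
  by rewrite -signr_odd /z; case: (odd n); rewrite /= ?expr0 ?expr1; ring.
have hG : G p = G p.-1 + X ^+ p.-1 * invfact (MNcar M) p.-1.
  have := big_nat_recr p.-1 0 (fun j => X ^+ j * invfact (MNcar M) j) (leq0n _).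
  by rewrite prednK //; apply.
have hR3 : beta * z ^+ 2 * ppow M (2 / dd p n.-1) * sigma M n.+1 = - Y3.
  by rewrite f4 /Y3 opprK.
have podd : odd p.
  by apply/negPn/negP => /(prime_oddPn pp) h; move: p3; rewrite h.
have hR1 : Y1 * X ^+ p.-1 = - ((-1) ^+ n.+1 * z * ppow M ((2 * p - 1)%:R / D) * sigma M n.+1).
  rewrite Xk mulnC exprM -signr_odd.
  have -> : odd p.-1 = false.
    by move: podd; rewrite -{1}(prednK p0) /= => /negbTE.
  rewrite expr0 expr1n mul1r zeta_pm1 // -ek (_ : (2 * p - 1 = p + p.-1)%N); last by lia.
  by rewrite exprD /Y1 /s /sg [(-1) ^+ n.+1]exprS; ring.
pose Bs := \sum_(1 <= k < p) (-1) ^+ k * (k%:R * beta) * invfact (MNcar M) k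
             * (-1) ^+ (n * k + n + 1) * z ^+ k.+1 * ppow M ((k + p)%:R / D).
pose S3 := \sum_(1 <= k < p) harm (MNcar M) k * invfact (MNcar M) k * (-1) ^+ (n.+1 * k.+1)
             * z ^+ k.+1 * ppow M ((k + p)%:R / D).
have hR2 : \sum_(1 <= k < p) (-1) ^+ k * (k%:R * beta - harm (MNcar M) k) * invfact (MNcar M) k
             * (-1) ^+ (n * k + n + 1) * z ^+ k.+1 * ppow M ((k + p)%:R / D) = Bs - S3.
  rewrite /Bs /S3 -sumrB; apply: eq_big_nat => k _.
  have <- : (-1) ^+ (n * k + n + 1) * (-1) ^+ k = (-1) ^+ (n.+1 * k.+1) :> MNcar M.
    by rewrite -exprD; congr (_ ^+ _); nia.
  ring.
have hBs : Bs = - (Y2 * G p.-1).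
  rewrite /Bs /Y2 /G mulNr opprK mulr_sumr big_add1; apply: eq_big_nat => j _.
  rewrite -(invfactS (char0 M) j) Xk.
  have <- : (-1) ^+ j.+1 * (-1) ^+ (n * j.+1 + n + 1) = (-1) ^+ (n.+1 * j) :> MNcar M.
    rewrite -exprD (_ : (j.+1 + (n * j.+1 + n + 1) = n.+1 * j + 2 * n.+1)%N); last by nia.
    by rewrite exprD [X in _ * X]exprM sqrrN !expr1n mulr1.
  rewrite -ek (_ : (j.+1 + p = j + p.+1)%N); last by lia.
  by rewrite [e ^+ (_ + _)]exprD -addn2 [z ^+ (_ + _)]exprD; ring.
have hZ : @zeta_expansion (MNcar M) p (ppow M) z (sigma M) n.+1 =
   \sum_(k < p) (-1) ^+ (n.+1 * k) * invfact (MNcar M) k * z ^+ k * ppow M (k%:R / D)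
   + \sum_(k < p) (-1) ^+ (n.+1 * k.+1) * invfact (MNcar M) k * z ^+ k.+1
     * ppow M ((k + p)%:R / D) * sigma M n.+1
   - S3 + 2^-1 * z ^+ 2 * ppow M (2 / dd p (n.+1 - 2)) * sigma M n.+1 ^+ 2
   + (-1) ^+ n.+1 * 2^-1 * z ^+ 3 * ppow M (2 / dd p (n.+1 - 2) - (p%:R - 2) / dd p n.+1).
  by [].
rewrite (combine _ _ hZ hS1 hS2 hS4 hF hR2 hBs hR3 hG hY hR1).
apply: vpD.
  by have := zp_norm M (leqW n2); rewrite hn2.
have P3' : 3 <= (p%:R : rat) by [].
have w0' : 0 <= w by apply: ltW.
have ET : 2 / dd p n.-1 = 2 * P ^+ 3 * w.
  rewrite hD1 (_ : 2 / (D / P) = 2 * P * D^-1); first by rewrite Eu; ring.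
  by field; rewrite !gt_eqF.
have T1 : 2 / dd p n.-1 <= 1.
  rewrite /dd ler_pdivrMr; last by rewrite mulr_gt0 ?exprn_gt0 //; lra.
  have h1 : 1 <= P ^+ n.-2 by rewrite exprn_ege1 //; lra.
  have -> : n.-1 = n.-2.+1 by lia.
  rewrite exprS -/P.
  have h2 : 6 <= P * (P - 1) by nra.
  rewrite (_ : 1 * (P * P ^+ n.-2 * (P - 1)) = (P * (P - 1)) * P ^+ n.-2); last by ring.
  move: h2 h1; move: (P * (P - 1)) (P ^+ n.-2) => a b; nra.
rewrite ET in hA.
have vz : vge (@vp _ M) z 0 by apply: vge_zeta.
have ve : forall k, vge (@vp _ M) (e ^+ k) (k%:R * (P ^+ 2 * w)).
  by move=> k; apply: vgeX; rewrite -Eu; apply: vge_ppow.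
have vsg : vge (@vp _ M) sg (- ((P - 1) * P * w)).
  by rewrite -En1 /vge vp_sigma.
have vX : vge (@vp _ M) X (P ^+ 2 * w).
  apply: vge_le (vgeM (vgeM (vge_sign M n.+1) vz) (ve 1%N)) _.
  by rewrite !add0r mul1r.
have i0 : invfact (MNcar M) 0 = 1 by rewrite /invfact fact0 invr1.
have i1 : invfact (MNcar M) 1 = 1 by rewrite /invfact (_ : (1`! = 1)%N) // invr1.
have vY1 : vge (@vp _ M) Y1 ((P ^+ 3 - P ^+ 2 + P) * w).
  apply: vgeN; apply: vge_le (vgeM (vgeM (vgeM (vge_sign M n) vz) (ve p)) vsg) _.
  rewrite /P; wle_tac w (0 : rat).
have vY2 : vge (@vp _ M) Y2 ((P + 1) * P ^+ 2 * w).
  apply: vgeN; apply: vge_le (vgeM (vgeM hb (vgeX 2 vz)) (ve p.+1)) _.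
  rewrite -addn1 natrD /P; wle_tac w (0 : rat).
have vY3 : vge (@vp _ M) Y3 ((2 * P ^+ 3 - P ^+ 2 + P) * w).
  apply: vgeN; apply: vge_le (vgeM (vgeM (vgeM hb (vgeX 2 vz)) (ve (2 * p)%N)) vsg) _.
  rewrite natrM /P; wle_tac w (0 : rat).
have vYm : vge (@vp _ M) (Y - Y1) ((P ^+ 3 + P ^+ 2) * w).
  rewrite hY (_ : Y1 + Y2 + Y3 - E0 - Y1 = Y2 + Y3 - E0); last by ring.
  apply: vgeB; last by apply: vge_le hA _; rewrite /P; wle_tac w (P ^+ 3 - P ^+ 2).
  apply: vpD; first by apply: vge_le vY2 _; rewrite /P; wle_tac w (0 : rat).
  by apply: vge_le vY3 _; rewrite /P; wle_tac w (P ^+ 3 - 2 * P ^+ 2 + P).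
have vY : vge (@vp _ M) Y ((P ^+ 3 - P ^+ 2 + P) * w).
  rewrite -(subrK Y1 Y); apply: vpD => //.
  by apply: vge_le vYm _; rewrite /P; wle_tac w (2 * P ^+ 2 - P).
have vG : forall m, (m <= p)%N -> vge (@vp _ M) (G m) 0.
  move=> m hm; have := vge_Gpart 0 pp hm (mulr_ge0 (sqr_ge0 P) w0') vX.
  by rewrite mul0r.
have vG1 : forall m, (1 <= m <= p)%N -> vge (@vp _ M) (G m - 1) (P ^+ 2 * w).
  move=> m /andP[h1 hm].
  have -> : G m - 1 = \sum_(1 <= j < m) X ^+ j * invfact (MNcar M) j.
    by rewrite /G big_ltn // expr0 i0 mul1r; ring.
  by have := vge_Gpart 1 pp hm (mulr_ge0 (sqr_ge0 P) w0') vX; rewrite mul1r.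
have vG2 : forall m, (2 <= m <= p)%N -> vge (@vp _ M) (G m - 1 - X) (2 * (P ^+ 2 * w)).
  move=> m /andP[h1 hm].
  have -> : G m - 1 - X = \sum_(2 <= j < m) X ^+ j * invfact (MNcar M) j.
    have m0 : (0 < m)%N by apply: leq_trans h1.
    by rewrite /G big_ltn // big_ltn // expr0 expr1 i0 i1 !mulr1; ring.
  by have := vge_Gpart 2 pp hm (mulr_ge0 (sqr_ge0 P) w0') vX.
have vR1 : vge (@vp _ M) ((-1) ^+ n.+1 * z * ppow M ((2 * p - 1)%:R / D) * sigma M n.+1) 0.
  have := vgeN (vgeM vY1 (vgeX p.-1 vX)); rewrite hR1 opprK => h; apply: vge_le h _.
  apply: addr_ge0; first by apply: mulr_ge0 => //; rewrite /P; nra.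
  by apply: mulr_ge0; [apply: ler0n | apply: mulr_ge0 => //; apply: sqr_ge0].
have mpos : 0 <= (P ^+ 3 - P ^+ 2 + P) * w by apply: mulr_ge0 => //; rewrite /P; nra.
rewrite ET.
apply: vpD; last first.
  have hle : (p <= 2 * p ^ 2)%N by rewrite expnS expn1 mulnA leq_pmull // muln_gt0 p0.
  have hc : 2 / dd p (n.+1 - 2) - (p%:R - 2) / dd p n.+1 = (2 * p ^ 2 - p + 2)%:R / dd p n.+1.
    rewrite hn2 hD1 hDS natrD natrB // natrM natrX -/P; field.
    by rewrite !gt_eqF.
  case: (boolP (p == 3%N)) => hp3.
    have hG1 : G (p - 2)%N = 1.
      rewrite (_ : (p - 2 = 1)%N); last by rewrite (eqP hp3).
      by rewrite /G big_nat1 expr0 i0 mulr1.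
    rewrite /= hG1 subrr mulr0 add0r -hc mul1r [(-1) ^+ n.+1]exprS mulN1r !mulNr addNr; exact: vge0.
  rewrite /= mul0r addr0.
  have p4 : (3 < p)%N.
    by rewrite ltn_neqAle p3 andbT eq_sym.
  have p22 : (2 <= p - 2 <= p)%N.
    by apply/andP; split; [rewrite leq_subRL | apply: leq_subr].
  set S5 := ((-1) ^+ n.+1 / 2 * z ^+ 3 * _).
  rewrite (_ : 2^-1 * Y1 ^+ 2 * (1 - G (p - 2)%N) + S5 =
     - (2^-1 * Y1 ^+ 2 * (G (p - 2)%N - 1 - X)) + (S5 - 2^-1 * Y1 ^+ 2 * X)); last by ring.
  apply: vpD.
    apply: vgeN; apply: vge_le (vgeM (vgeM (vge_half M pp p3) (vgeX 2 vY1)) (vG2 _ p22)) _.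
    by rewrite /P; wle_tac w (2 * P).
  pose q := ppow M (- (P ^+ n.+1)^-1).
  have Ew : w = D^-1 / P ^+ 2 by rewrite Eu; field; rewrite gt_eqF.
  have hc2 : ppow M (2 / dd p (n.+1 - 2) - (p%:R - 2) / dd p n.+1) = e ^+ (2 * p + 1) * q ^+ 2.
    rewrite ek /q -(ppowMn M 2) -ppowD; congr ppow.
    rewrite hn2 hD1 hDS En1 Ew natrD natrM -/P; field.
    by rewrite !gt_eqF.
  have hsg : sg = q + sigma M n.+2 by rewrite /sg (sigmaS M (n := n.+1) isT).
  rewrite /S5 hc2 /Y1 /X /s hsg.
  rewrite (_ : e ^+ (2 * p + 1) = e ^+ p * e ^+ p * e); last by rewrite mul2n -addnn !exprD expr1.
  set sg2 := sigma M n.+2.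
  have vsg2 : vge (@vp _ M) sg2 (- ((P - 1) * w)) by rewrite -En2 /vge vp_sigma.
  have vq : vge (@vp _ M) q (- ((P - 1) * P * w)) by rewrite /q -En1; apply: vge_ppow.
  have v2q : vge (@vp _ M) (2 * q + sg2) (- ((P - 1) * P * w)).
    apply: vpD; first by apply: vge_le (vgeM (vge_nat M 2) vq) _; rewrite add0r.
    by apply: vge_le vsg2 _; rewrite /P; wle_tac w ((P - 1) ^+ 2).
  rewrite (_ : (-1) ^+ n.+1 / 2 * z ^+ 3 * (e ^+ p * e ^+ p * e * q ^+ 2) -
     2^-1 * (- ((-1) ^+ n * z * e ^+ p * (q + sg2))) ^+ 2 * ((-1) ^+ n.+1 * z * e) =
     - ((-1) ^+ n.+1 / 2 * z ^+ 3 * ((e ^+ p * e ^+ p * e) * (sg2 * (2 * q + sg2))))); last first.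
    by rewrite [(-1) ^+ n.+1]exprS -signr_odd; case: (odd n); rewrite /= ?expr0 ?expr1; ring.
  apply: vgeN.
  apply: vge_le (vgeM (vgeM (vgeM (vge_sign M n.+1) (vge_half M pp p3)) (vgeX 3 vz))
     (vgeM (vgeM (vgeM (ve p) (ve p)) (ve 1%N)) (vgeM vsg2 v2q))) _.
  by rewrite /P; wle_tac w (1 : rat).
apply: vgeB; last first.
  rewrite /Tail; apply: vge_sum => i /andP[h3 hi].
  apply: vge_le (vgeM (vgeM (vgeX i vY) (vge_invfact M pp hi)) (vG (p - i)%N (leq_subr i p))) _.
  rewrite !addr0; apply: (@le_trans _ _ (3 * ((P ^+ 3 - P ^+ 2 + P) * w))).
    by rewrite /P; wle_tac w (P ^+ 3 - 3 * P ^+ 2 + 3 * P).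
  by apply: ler_wpM2r => //; rewrite (ler_nat _ 3 i).
apply: vgeB; last first.
  rewrite (_ : Y ^+ 2 - Y1 ^+ 2 = (Y - Y1) * (Y + Y1)); last by ring.
  apply: vge_le (vgeM (vgeM (vge_half M pp p3) (vgeM vYm (vpD vY vY1))) (vG (p - 2)%N (leq_subr 2 p))) _.
  by rewrite /P; wle_tac w P.
apply: vpD; last first.
  by apply: vge_le (vgeM hA (vG p.-1 (leq_pred p))) _; rewrite addr0.
apply: vgeB.
  apply: vgeN; apply: vge_le (vgeM vR1 (vge_wilson M pp)) _.
  by rewrite add0r -ET.
apply: vge_le (vgeM vY3 (vG1 p.-1 _)) _; first by rewrite -!subn1 subn_gt0 p2 leq_subr.
by rewrite /P; wle_tac w P.
Qed.
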